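(* Let $G$ be a finite group and $\underline{\mathcal{F}}$ any indexing system. There exist levelwise $(G\times\Sigma_\bullet)$-equivalences of operads $f:\mathcal{SM}_{\varnothing}\to\varepsilon^*\mathscr{P}$ and $f':\mathcal{SM}_{\mathbf{O}(\underline{\mathbf{Set}})}\to\mathscr{P}_G$ such that $\Delta\circ f = f'\circ\iota$, where $\iota:\mathcal{SM}_\varnothing\subseteq\mathcal{SM}_{\mathbf{O}(\underline{\mathcal{F}})}\subseteq\mathcal{SM}_{\mathbf{O}(\underline{\mathbf{Set}})}$ are the inclusions and $\Delta:\varepsilon^*\mathscr{P}\to\mathscr{P}_G$ sends $\sigma\in\Sigma_n$ to the constant function $G\to\Sigma_n$ with value $\sigma$.
   Context: For a finite $H$-set $T$ with ordering, $\sigma:H\to\Sigma_{|T|}$ is its permutation representation and $\Gamma_T=\{(h,\sigma(h))\}$. $\widetilde X$ denotes chaotification (one morphism between any two objects), applied levelwise. For a set of exponents $\mathcal{N}$ (for each $H\subseteq G$ a set of ordered finite $H$-sets), $\mathcal{SM}_{\mathcal{N}}=\widetilde{\mathbb{F}(S_{\mathcal{N}})}$ with $\mathbb{F}$ the free operad on symmetric sequences of $G$-sets and $S_{\mathcal{N}}=(G\times\Sigma_0)/\Gamma_\varnothing\sqcup(G\times\Sigma_2)/\Gamma_{**}\sqcup\coprod_{T\in\mathcal{N}}(G\times\Sigma_{|T|})/\Gamma_T$. $\mathbf{O}(\underline{\mathcal{F}})$ is the set of exponents consisting of the nontrivial orbits $H/K\in\underline{\mathcal{F}}$ ($K\subsetneq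 H$), with orderings chosen once and for all for $\mathbf{O}(\underline{\mathbf{Set}})$ (all nontrivial orbits, the maximal indexing system), and free operads built with a common choice of $\Sigma$-orbit representatives so that the inclusions $S_\varnothing\subseteq S_{\mathbf{O}(\underline{\mathcal{F}})}\subseteq S_{\mathbf{O}(\underline{\mathbf{Set}})}$ induce inclusions of operads. $\mathscr{P}=\widetilde{\Sigma_\bullet}$ is the Barratt–Eccles operad, $\varepsilon^*\mathscr{P}$ it with trivial $G$-action, and $\mathscr{P}_G=\widetilde{\mathbf{Set}(G,\Sigma_\bullet)}$ with $(g,\tau)\cdot f=(x\mapsto\tau f(g^{-1}x))$ and pointwise operad structure. A levelwise $(G\times\Sigma_\bullet)$-equivalence induces equivalences of categories on $\Lambda$-fixed points for all $\Lambda\subseteq G\times\Sigma_n$, all $n$. An indexing system is in the sense of Blumberg–Hill. *)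

(* Defs.v *)
From HB Require Import structures.
From mathcomp Require Import all_boot all_order all_fingroup.
Set Implicit Arguments.
Unset Strict Implicit.
Unset Printing Implicit Defensive.

(*  * The finite group G is the whole finGroupType gT; subgroups H : {group gT}*)
(*  * Sigma_n = 'S_n.  MathComp's product of permutations is (s * t) x =       *)
(*    t (s x); function composition  rho o sigma  is therefore (sigma*rho)%g.  *)
(*    Subgroups of G x Sigma_n are the same subsets for either multiplication. *)
(*  * A finite H-set with an ordering is (n, a) with a : gT -> 'I_n -> 'I_n an *)
(*    action of H on {0,..,n-1}; a h is the permutation representation        *)
(*    sigma(h), and Gamma_T = {(h, sigma h) | h in H}.                         *)
(*  * All the categories involved are chaotic (X~), hence a functor between   *)
(*    them is just a map of object sets, a map of operads of chaotic          *)
(*    categories is a map of the underlying operads of object sets, and the   *)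
(*    Lambda-fixed category of X~ is the chaotic category on the Lambda-fixed *)
(*    objects.                                                                *)

Section Defs.
Variable gT : finGroupType.

Definition is_Hset (H : {set gT}) n (a : gT -> 'I_n -> 'I_n) :=
  (forall i, a 1%g i = i) /\
  (forall h h' i, h \in H -> h' \in H -> a (h * h')%g i = a h (a h' i)).

Definition Hequivariant (H : {set gT}) n m (a : gT -> 'I_n -> 'I_n)
  (b : gT -> 'I_m -> 'I_m) (f : 'I_n -> 'I_m) :=
  forall h i, h \in H -> f (a h i) = b h (f i).

(* The transitive H-set H/K (left cosets xK, x in H), ordered once and for  *)
(* all by the enumeration of the set of cosets; the action is h.(xK)=(hx)K.  *)
Definition coset_list (K H : {set gT}) : seq {set gT} := enum (lcosets K H).

Definition coset_act (K H : {set gT}) k (h : gT) (i : 'I_k) : 'I_k :=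
  let cs := coset_list K H in
  odflt i (insub (index ((h *: nth set0 cs i)%g) cs) : option 'I_k).

Definition orbit_size (K H : {set gT}) := #|lcosets K H|.

(* F H n a : the ordered finite H-set (n,a) belongs to F(H).                 *)
Definition indexing_system
  (F : {group gT} -> forall n, (gT -> 'I_n -> 'I_n) -> Prop) : Prop :=
  (forall (H : {group gT}) n, F H n (fun _ i => i)) /\
  (forall (H : {group gT}) n a m b, is_Hset H b -> F H n a ->
     (exists f : 'I_n -> 'I_m, bijective f /\ Hequivariant H a b f) ->
     F H m b) /\
  (forall (H K : {group gT}) n a, K \subset H -> F H n a -> F K n a) /\
  (forall (H : {group gT}) (g : gT) n a, F H n a ->
     F (H :^ g)%G n (fun k => a (g * k * g^-1)%g)) /\
  (forall (H : {group gT}) n a m b, is_Hset H b -> F H n a ->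
     (exists f : 'I_m -> 'I_n, injective f /\ Hequivariant H b a f) ->
     F H m b) /\
  (forall (H : {group gT}) n a m b p c, is_Hset H c -> F H n a -> F H m b ->
     (exists f : 'I_p -> 'I_n * 'I_m, bijective f /\
        forall h i, h \in H -> f (c h i) = (a h (f i).1, b h (f i).2)) ->
     F H p c) /\
  (forall (H : {group gT}) n a m b p c, is_Hset H c -> F H n a -> F H m b ->
     (exists f : 'I_p -> 'I_n + 'I_m, bijective f /\
        forall h i, h \in H -> f (c h i) =
          match f i with inl x => inl (a h x) | inr y => inr (b h y) end) ->
     F H p c) /\
  (* closed under self-induction: H/K in F(H), T in F(K) => H x_K T in F(H); *)
  (* H x_K T is characterised (up to iso) as an H-set X with an H-map        *)
  (* pi : X -> H/K whose fibre over the coset K is K-isomorphic to T.        *)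
  (forall (H K : {group gT}) m b p c, K \subset H ->
     F H (orbit_size K H) (@coset_act K H (orbit_size K H)) ->
     F K m b -> is_Hset H c ->
     (exists (pi : 'I_p -> 'I_(orbit_size K H)) (e : 'I_m -> 'I_p),
        Hequivariant H c (@coset_act K H (orbit_size K H)) pi /\
        injective e /\ Hequivariant K b c e /\
        (forall x, (nth set0 (coset_list K H) (pi x) == (K : {set gT}))
                   = (x \in [seq e y | y <- enum 'I_m]))) ->
     F H p c).

(* An admissibility predicate on pairs (H, K) describes the set of exponents *)
(* { H/K : K proper in H, admissible } (with the fixed orderings above).     *)
Definition exps := {group gT} -> {group gT} -> Prop.
Definition O_empty : exps := fun _ _ => False.
Definition O_of (F : {group gT} -> forall n, (gT -> 'I_n -> 'I_n) -> Prop) : exps := fun H K =>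
  F H (orbit_size K H) (@coset_act K H (orbit_size K H)).
Definition O_Set : exps := fun _ _ => True.

(* Generators of (G x Sigma_k)/Gamma_T: kinds are T = varnothing (arity 0,    *)
(* H = G), T = ** (arity 2, trivial G-set) and T = H/K.                       *)
Inductive gkind := GUnit | GMul | GOrb of {group gT} & {group gT}.

Definition kgrp (x : gkind) : {set gT} :=
  match x with GOrb H _ => H | _ => [set: gT] end.
Definition kact (x : gkind) k : gT -> 'I_k -> 'I_k :=
  match x with GOrb H K => @coset_act K H k | _ => fun _ i => i end.
Definition inGamma (x : gkind) k (h : gT) (t : 'S_k) : bool :=
  (h \in kgrp x) && [forall i, t i == @kact x k h i].

Definition gen_ok (N : exps) (x : gkind) k : Prop :=
  match x with
  | GUnit => k = 0
  | GMul => k = 2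
  | GOrb H K => K \proper H /\ N H K /\ k = orbit_size K H
  end.

(* Node x k g s cs : the generator [(g,s)] in (G x Sigma_k)/Gamma_T with its  *)
(* k inputs filled by cs;  Leaf j : the input labelled j.                    *)
Inductive tree :=
| Leaf of nat
| Node (x : gkind) (k : nat) (g : gT) (s : 'S_k) (cs : seq tree).
Arguments Node x k g s cs : clear implicits.

Fixpoint wf (N : exps) (t : tree) : Prop :=
  match t with
  | Leaf _ => True
  | Node x k _ _ cs => gen_ok N x k /\ size cs = k /\
      (fix allwf l := match l with [::] => True | c :: l => wf N c /\ allwf l end) cs
  end.

Fixpoint leaves (t : tree) : seq nat :=
  match t with
  | Leaf j => [:: j]
  | Node _ _ _ _ cs =>
      (fix lv l := match l with [::] => [::] | c :: l => leaves c ++ lv l end) cs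
  end.

(* t represents an element of F(S_N)(n) *)
Definition valid (N : exps) n (t : tree) := wf N t /\ perm_eq (leaves t) (iota 0 n).

Fixpoint tmap (fl : nat -> tree) (fg : gT -> gT) (t : tree) : tree :=
  match t with
  | Leaf j => fl j
  | Node x k g s cs => Node x k (fg g) s (map (tmap fl fg) cs)
  end.

Definition relabel (f : nat -> nat) := tmap (fun j => Leaf (f j)) id.
Definition permfun n (r : 'S_n) (j : nat) : nat :=
  match (insub j : option 'I_n) with Some i => r i | None => j end.

Definition tact n (l : gT * 'S_n) (t : tree) : tree :=
  relabel (permfun l.2) (tmap Leaf (fun y => l.1 * y)%g t).

Definition tcomp (i n : nat) (t u : tree) : tree :=
  tmap (fun j => if j < i then Leaf j
                 else if j == i then relabel (addn i) u
                 else Leaf (j + n).-1) id t.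

Definition tunit := Leaf 0.

Definition permute_seq k (r : 'S_k) (cs : seq tree) :=
  [seq nth (Leaf 0) cs (r i) | i <- enum 'I_k].

(* the equivalence relation whose classes are the elements of F(S_N)(n) *)
Inductive tequiv : tree -> tree -> Prop :=
| te_refl t : tequiv t t
| te_sym t u : tequiv t u -> tequiv u t
| te_trans t u v : tequiv t u -> tequiv u v -> tequiv t v
| te_coset x k g s h r cs : @inGamma x k h r ->
    tequiv (Node x k g s cs) (Node x k (g * h)%g (r * s)%g cs)
| te_perm x k g s (r : 'S_k) cs : size cs = k ->
    tequiv (Node x k g (s * r)%g cs) (Node x k g s (permute_seq r cs))
| te_cong x k g s cs1 c c' cs2 : tequiv c c' ->
    tequiv (Node x k g s (cs1 ++ c :: cs2)) (Node x k g s (cs1 ++ c' :: cs2)).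

(* the inclusions SM_empty <= SM_O(F) <= SM_O(Set) on representatives *)
Definition incl (t : tree) : tree := t.

(* sigma in Sigma_m is the word sigma(0) ... sigma(m-1); sigma o_i tau       *)
(* substitutes the word of tau (shifted by i) for the letter i.              *)
Definition permcomp (i m n p : nat) (s : 'S_m) (t : 'S_n) (u : 'S_p) : bool :=
  [seq (u q : nat) | q <- enum 'I_p] ==
  flatten [seq (let a := (s q : nat) in
                if a < i then [:: a]
                else if a == i then [seq (t r : nat) + i | r <- enum 'I_n]
                else [:: (a + n).-1]) | q <- enum 'I_m].

(* Target eps^* P : objects Sigma_n, trivial G-action, (g,rho).s = rho o s. *)
Definition eps_act n (l : gT * 'S_n) (s : 'S_n) : 'S_n := (s * l.2)%g.
(* Target P_G : objects Set(G, Sigma_n), (g,tau).f = (x |-> tau o f(g^-1 x)) *)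
Definition PG_act n (l : gT * 'S_n) (f : {ffun gT -> 'S_n}) : {ffun gT -> 'S_n} :=
  [ffun x => (f (l.1^-1 * x)%g * l.2)%g].

(* f : SM_N -> Y~ is a map of G-operads (well defined on classes, unital,   *)
(* compatible with partial compositions, G x Sigma_n-equivariant) and      *)
(* induces equivalences on Lambda-fixed (chaotic) categories for every      *)
(* subgroup Lambda of G x Sigma_n.  A functor between chaotic categories is *)
(* automatically fully faithful, and is essentially surjective iff every    *)
(* object of the target is isomorphic (always true) to one in the image,    *)
(* i.e. iff the source is nonempty whenever the target is.                  *)
Definition lw_equiv_eps (N : exps) (f : forall n, tree -> 'S_n) : Prop :=
  (forall n t u, valid N n t -> valid N n u -> tequiv t u -> f n t = f n u) /\
  f 1 tunit = 1%g /\
  (forall m n i t u, i < m -> valid N m t -> valid N n u ->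
     permcomp i (f m t) (f n u) (f (m + n).-1 (tcomp i n t u))) /\
  (forall n (l : gT * 'S_n) t, valid N n t -> f n (tact l t) = eps_act l (f n t)) /\
  (forall n (L : {group gT * 'S_n}),
     (exists y : 'S_n, forall l, l \in L -> eps_act l y = y) ->
     exists t, valid N n t /\ forall l, l \in L -> tequiv (tact l t) t).

Definition lw_equiv_PG (N : exps) (f : forall n, tree -> {ffun gT -> 'S_n}) : Prop :=
  (forall n t u, valid N n t -> valid N n u -> tequiv t u -> f n t = f n u) /\
  f 1 tunit = [ffun _ => 1%g] /\
  (forall m n i t u, i < m -> valid N m t -> valid N n u ->
     forall x, permcomp i (f m t x) (f n u x) (f (m + n).-1 (tcomp i n t u) x)) /\
  (forall n (l : gT * 'S_n) t, valid N n t -> f n (tact l t) = PG_act l (f n t)) /\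
  (forall n (L : {group gT * 'S_n}),
     (exists y : {ffun gT -> 'S_n}, forall l, l \in L -> PG_act l y = y) ->
     exists t, valid N n t /\ forall l, l \in L -> tequiv (tact l t) t).

Definition Delta n (s : 'S_n) : {ffun gT -> 'S_n} := [ffun _ => s].

End Defs.

(* Main.v *)
Require Import Defs.
From HB Require Import structures.
From mathcomp Require Import all_boot all_order all_fingroup.
From Stdlib Require List.
From mathcomp Require Import zify.
From Stdlib Require Import Lia.
Unset Printing Implicit Defensive.

Section Aux.
Variable gT : finGroupType.
Implicit Types (t u : tree gT) (cs : seq (tree gT)).

Section Ind.
Variable P : tree gT -> Prop.
Hypothesis HL : forall j, P (Leaf gT j).
Hypothesis HN : forall x k g s cs, (forall c, List.In c cs -> P c) -> P (@Node gT x k g s cs).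
Fixpoint tree_ind2 (t : tree gT) : P t :=
  match t with
  | Leaf j => HL j
  | @Node _ x k g s cs => @HN x k g s cs
      ((fix F (l : seq (tree gT)) : forall c, List.In c l -> P c :=
          match l with
          | [::] => fun c H => False_ind _ H
          | c0 :: l' => fun c H => match H with
                                  | or_introl E => eq_ind c0 P (tree_ind2 c0) c E
                                  | or_intror H' => F l' c H' end
          end) cs)
  end.
End Ind.

Lemma leaves_node x k g s cs : leaves (@Node gT x k g s cs) = flatten (map (@leaves gT) cs).
Proof. by elim: cs => //= c cs ->. Qed.

Lemma wf_node N x k g s cs : wf N (@Node gT x k g s cs) <->
  gen_ok N x k /\ size cs = k /\ (forall c, List.In c cs -> wf N c).
Proof.
have E: (fix allwf l := match l with [::] => True | c :: l => wf N c /\ allwf l end) cs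
   <-> (forall c, List.In c cs -> wf N c).
  elim: cs => [|c cs IH] /=; first by split=> // _ c [].
  split=> [[h1 h2] d [<-|hd]|h]; [done|by apply IH|].
  by split; [apply h; left| apply IH => d hd; apply h; right].
simpl; split=> [[a [b c]]|[a [b c]]]; do 2 (split=> //); by apply E.
Qed.

Lemma map_In_eq (A B : Type) (f g : A -> B) (l : seq A) :
  (forall a, List.In a l -> f a = g a) -> map f l = map g l.
Proof.
elim: l => //= a l IH H; rewrite H; last by left.
by rewrite IH // => b hb; apply H; right.
Qed.

Definition rep (H : {set gT}) (y : gT) := repr (H :* y)%g.
Definition etaH (H : {set gT}) y := (y * (rep H y)^-1)%g.
Definition kphi (x : gkind gT) k (y : gT) : 'I_k -> 'I_k :=
  match x with GOrb H K => @coset_act gT K H k (etaH H y) | _ => id end.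
Definition node_ok (x : gkind gT) k : bool :=
  match x with GOrb H K => k == orbit_size K H | _ => true end.

Fixpoint wordx (z : gT) (t : tree gT) : seq nat :=
  match t with
  | Leaf j => [:: j]
  | @Node _ x k g s cs =>
     if node_ok x k then
       flatten [seq nth [::] (map (wordx z) cs) (s (kphi x k (g^-1 * z)%g i)) | i <- enum 'I_k]
     else [::]
  end.

Definition seqperm n (w : seq nat) : 'S_n :=
  odflt 1%g [pick p : 'S_n | [seq (p i : nat) | i <- enum 'I_n] == w].

Lemma seqpermE n w (p : 'S_n) : [seq (p i : nat) | i <- enum 'I_n] = w -> seqperm n w = p.
Proof.
move=> Hp; rewrite /seqperm; case: pickP => [q /eqP Hq|]; last by move/(_ p); rewrite Hp eqxx.
apply/permP => i; apply: val_inj.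
have /eq_in_map H := etrans Hq (esym Hp).
by apply: H; rewrite mem_enum.
Qed.

Lemma seqperm_ex n w : perm_eq w (iota 0 n) -> exists p : 'S_n, [seq (p i : nat) | i <- enum 'I_n] = w.
Proof.
move=> Hw.
have Hs : size w = n by rewrite (perm_size Hw) size_iota.
have Hu : uniq w by rewrite (perm_uniq Hw) iota_uniq.
have Hlt : forall i : 'I_n, nth 0 w i < n.
  move=> i; have : nth 0 w i \in w by rewrite mem_nth // Hs.
  by rewrite (perm_mem Hw) mem_iota.
pose f (i : 'I_n) : 'I_n := insubd i (nth 0 w i).
have fE i : val (f i) = nth 0 w i by rewrite val_insubd Hlt.
have finj : injective f.
  move=> i j /(congr1 val); rewrite !fE => /eqP; rewrite nth_uniq ?Hs //.
  by move/eqP/val_inj.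
exists (perm finj).
transitivity [seq nth 0 w (val i) | i <- enum 'I_n].
  by apply: eq_map => i; rewrite permE fE.
by rewrite (map_comp (nth 0 w) val) val_enum_ord -Hs -/(mkseq _ _) mkseq_nth.
Qed.

End Aux.
Arguments wordx {gT} z t.
Arguments kphi {gT} x k y.
Arguments node_ok {gT} x k.
Arguments rep {gT} H y.
Arguments etaH {gT} H y.
Arguments tree_ind2 {gT} P HL HN t.
Arguments leaves_node {gT} x k g s cs.
Arguments wf_node {gT} N x k g s cs.
Arguments map_In_eq {A B} f g l.

Section W.
Variable gT : finGroupType.
Implicit Types (t u : tree gT) (cs : seq (tree gT)).

Lemma nth_map_nil (A B : Type) (h : seq A -> seq B) (s : seq (seq A)) j :
  h [::] = [::] -> nth [::] (map h s) j = h (nth [::] s j).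
Proof.
move=> h0; case: (ltnP j (size s)) => hj; first by rewrite (nth_map [::]).
by rewrite !nth_default ?size_map.
Qed.

Lemma flatten_map_flatten (A B : Type) (G : A -> seq B) (L : seq (seq A)) :
  flatten (map (fun w => flatten (map G w)) L) = flatten (map G (flatten L)).
Proof. by elim: L => //= w L IH; rewrite map_cat flatten_cat IH. Qed.

Lemma wordx_tmap z fl t :
  wordx z (tmap fl id t) = flatten (map (fun j => wordx z (fl j)) (wordx z t)).
Proof.
elim/(@tree_ind2 gT): t => [j|x k g s cs IH] /=; first by rewrite cats0.
case: (node_ok x k) => //.
have E : map (wordx z) (map (tmap fl id) cs) =
   map (fun c => flatten (map (fun j => wordx z (fl j)) (wordx z c))) cs.
  by rewrite -map_comp; apply: map_In_eq => c /IH.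
rewrite E -flatten_map_flatten -map_comp; congr flatten; apply: eq_map => i /=.
by rewrite (map_comp (fun w => flatten (map _ w))) nth_map_nil.
Qed.

Lemma wordx_tmapg z a t : wordx z (tmap (Leaf gT) (fun y => a * y)%g t) = wordx (a^-1 * z)%g t.
Proof.
elim/(@tree_ind2 gT): t => [j|x k g s cs IH] //=.
rewrite invMg -mulgA; case: (node_ok x k) => //.
congr flatten; apply: eq_map => i /=; rewrite -map_comp.
by rewrite (map_In_eq _ (wordx (a^-1 * z)%g)) // => c /IH.
Qed.

Lemma wordx_relabel z f t : wordx z (relabel f t) = map f (wordx z t).
Proof. by rewrite /relabel wordx_tmap; elim: (wordx z t) => //= j w ->. Qed.

Lemma wordx_tact n z (l : gT * 'S_n) t :
  wordx z (tact l t) = map (permfun l.2) (wordx (l.1^-1 * z)%g t).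
Proof. by rewrite /tact wordx_relabel wordx_tmapg. Qed.

End W.

Section C.
Variable gT : finGroupType.
Implicit Types (t u : tree gT) (cs : seq (tree gT)).
Variables H K : {group gT}.
Local Notation cs := (coset_list K H).
Local Notation k := (orbit_size K H).

Lemma size_cs : size cs = k.
Proof. by rewrite /coset_list /orbit_size cardE. Qed.

Lemma cs_mem (i : 'I_k) : nth set0 cs i \in lcosets K H.
Proof. by rewrite -mem_enum mem_nth // size_cs. Qed.

Lemma cs_inj (i j : 'I_k) : nth set0 cs i = nth set0 cs j -> i = j.
Proof.
move=> /eqP; rewrite nth_uniq ?size_cs ?enum_uniq //; by move/eqP/val_inj.
Qed.

Lemma lcosets_mul h C : h \in H -> C \in lcosets K H -> (h *: C)%g \in lcosets K H.
Proof.
move=> hH /lcosetsP [x xH ->]; apply/lcosetsP; exists (h * x)%g; first by rewrite groupM.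
by rewrite lcosetM.
Qed.

Lemma coset_act_nth h (i : 'I_k) : h \in H ->
  nth set0 cs (@coset_act gT K H k h i) = (h *: nth set0 cs i)%g.
Proof.
move=> hH.
have Hm : (h *: nth set0 cs i)%g \in cs by rewrite mem_enum lcosets_mul ?cs_mem.
have Hi : index (h *: nth set0 cs i)%g cs < k.
  by move: Hm; rewrite -index_mem size_cs.
rewrite /coset_act insubT /= nth_index //.
Qed.

Lemma coset_actM h h' (i : 'I_k) : h \in H -> h' \in H ->
  @coset_act gT K H k h (@coset_act gT K H k h' i) = @coset_act gT K H k (h * h')%g i.
Proof.
move=> hH h'H; apply: cs_inj.
by rewrite !coset_act_nth ?groupM // lcosetM.
Qed.

Lemma coset_act1 (i : 'I_k) : @coset_act gT K H k 1%g i = i.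
Proof. by apply: cs_inj; rewrite coset_act_nth ?group1 // lcoset1. Qed.

Lemma coset_act_inj h : h \in H -> injective (@coset_act gT K H k h).
Proof.
move=> hH i j E.
have := congr1 (@coset_act gT K H k h^-1) E.
by rewrite !coset_actM ?groupV // mulVg !coset_act1.
Qed.

Lemma etaH_mem y : etaH H y \in H.
Proof.
have := mem_repr_rcoset H y; rewrite mem_rcoset /etaH /rep => E.
by move: E; rewrite -groupV invMg invgK.
Qed.

Lemma etaH_mul h y : h \in H -> etaH H (h * y)%g = (h * etaH H y)%g.
Proof.
move=> hH; rewrite /etaH /rep rcosetM rcoset_id //.
by rewrite mulgA.
Qed.

End C.

Section TE.
Variable gT : finGroupType.
Implicit Types (t u : tree gT) (cs : seq (tree gT)).

Lemma wordx_te z t u : tequiv t u -> wordx z t = wordx z u.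
Proof.
elim=> {t u}.
- by [].
- by move=> t u _ ->.
- by move=> t u v _ -> _ ->.
- move=> x k g s h r cs /andP [hH /forallP hr] /=.
  case Hok: (node_ok x k) => //; congr flatten; apply: eq_map => i.
  rewrite permM; congr (nth _ _ (s _)).
  rewrite invMg -mulgA.
  case: x hH hr Hok => [||H K] /= hH hr Hok; try by move/eqP: (hr i).
  move/eqP: Hok => Hk; subst k.
  move/eqP: (hr (kphi (GOrb H K) _ (h^-1 * (g^-1 * z))%g i)) => -> /=.
  rewrite [etaH H (h^-1 * _)]etaH_mul ?groupV // coset_actM //; last by rewrite groupM ?groupV ?etaH_mem.
  by rewrite mulKVg.
- move=> x k g s r cs Hs /=.
  case: (node_ok x k) => //; congr flatten; apply: eq_map => i.
  rewrite permM /permute_seq -map_comp.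
  set j := s _.
  rewrite (nth_map (Leaf gT 0) [::]) ?Hs //.
  rewrite (nth_map j [::]) ?size_enum_ord //=.
  by rewrite nth_ord_enum.
- by move=> x k g s cs1 c c' cs2 _ E /=; rewrite !map_cat /= E.
Qed.

End TE.

Section PW.
Variable gT : finGroupType.
Implicit Types (t u : tree gT) (cs : seq (tree gT)).

Lemma perm_map_enum k (f : 'I_k -> 'I_k) : injective f ->
  perm_eq [seq (f i : nat) | i <- enum 'I_k] (iota 0 k).
Proof.
move=> finj; rewrite -val_enum_ord (map_comp val f); apply: perm_map.
apply: uniq_perm; first by rewrite map_inj_uniq // enum_uniq.
  exact: enum_uniq.
move=> j; rewrite mem_enum; apply/mapP; exists ((perm finj)^-1 j)%g; rewrite ?mem_enum //.
by rewrite -[in LHS](permKV (perm finj) j) permE.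
Qed.

Lemma perm_flatten_In (A : eqType) (F G : tree gT -> seq A) cs :
  (forall c, List.In c cs -> perm_eq (F c) (G c)) ->
  perm_eq (flatten (map F cs)) (flatten (map G cs)).
Proof.
elim: cs => //= c cs IH H; apply: perm_cat; first by apply: H; left.
by apply: IH => d hd; apply: H; right.
Qed.

Lemma gen_ok_node (N : exps gT) (x : gkind gT) k : gen_ok N x k -> node_ok x k.
Proof. by case: x => [||H K] /=; [..|case=> _ [_ ->]]. Qed.

Lemma kphi_inj (N : exps gT) (x : gkind gT) k y : gen_ok N x k -> injective (kphi x k y).
Proof.
case: x => [||H K] /=; try by move=> _ i j.
case=> _ [_ Hk]; subst k; apply: coset_act_inj; exact: etaH_mem.
Qed.

Lemma wordx_perm (N : exps gT) (z : gT) t : wf N t -> perm_eq (wordx z t) (leaves t).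
Proof.
elim/(@tree_ind2 gT): t => [j|x k g s cs IH] //.
move/wf_node => [Hg [Hs Hc]]; rewrite leaves_node /= (gen_ok_node _ _ _ Hg).
set ws := map (wordx z) cs.
have -> : [seq nth [::] ws (s (kphi x k (g^-1 * z)%g i)) | i <- enum 'I_k] =
   map (nth [::] ws) [seq (s (kphi x k (g^-1 * z)%g i) : nat) | i <- enum 'I_k].
  by rewrite -map_comp.
have Hinj : injective (fun i => s (kphi x k (g^-1 * z)%g i)).
  by move=> i j /perm_inj /(kphi_inj _ _ _ _ Hg).
apply: (perm_trans (perm_flatten (perm_map (nth [::] ws) (perm_map_enum _ _ Hinj)))).
rewrite -/(mkseq _ _) -Hs -(size_map (wordx z)) mkseq_nth.
by apply: perm_flatten_In => c hc; apply: IH => //; apply: Hc.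
Qed.

Lemma wf_empty_any (N : exps gT) t : wf (@O_empty gT) t -> wf N t.
Proof.
elim/(@tree_ind2 gT): t => [j|x k g s cs IH] // /wf_node [Hg [Hs Hc]].
apply/wf_node; split; last by split=> // c hc; apply: IH => //; apply: Hc.
by case: x Hg => [||H K] //= [_ []].
Qed.

Lemma wf_empty_const (z zz : gT) t : wf (@O_empty gT) t -> wordx z t = wordx zz t.
Proof.
elim/(@tree_ind2 gT): t => [j|x k g s cs IH] // /wf_node [Hg [Hs Hc]].
case: x Hg => [||H K] //= Hg; last by case: Hg => _ [].
all: congr flatten; apply: eq_map => i; congr nth; apply: map_In_eq => c hc; apply: IH => //; exact: Hc.
Qed.

End PW.

Section F.
Variable gT : finGroupType.
Implicit Types (t u : tree gT) (cs : seq (tree gT)).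

Definition fE n t : 'S_n := seqperm n (wordx 1%g t).
Definition fP n t : {ffun gT -> 'S_n} := [ffun z => seqperm n (wordx z t)].

Lemma valid_perm (N : exps gT) n z t : valid N n t -> perm_eq (wordx z t) (iota 0 n).
Proof. by case=> Hw Hl; apply: perm_trans (@wordx_perm gT N z t Hw) Hl. Qed.

Lemma seqperm_vals n w : perm_eq w (iota 0 n) ->
  [seq (seqperm n w i : nat) | i <- enum 'I_n] = w.
Proof. by move=> /seqperm_ex [p Hp]; rewrite (seqpermE _ _ _ Hp). Qed.

Lemma permfun_val n (r : 'S_n) (i : 'I_n) : permfun r i = r i.
Proof. by rewrite /permfun valK. Qed.

Lemma seqperm_act n w (r : 'S_n) : perm_eq w (iota 0 n) ->
  seqperm n (map (permfun r) w) = (seqperm n w * r)%g.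
Proof.
move=> Hw; apply: seqpermE.
rewrite -{2}(@seqperm_vals _ _ Hw) -map_comp; apply: eq_map => i /=.
by rewrite permM permfun_val.
Qed.

Definition Fc i n (wu : seq nat) (j : nat) : seq nat :=
  if j < i then [:: j] else if j == i then map (addn i) wu else [:: (j + n).-1].

Lemma wordx_tcomp z i n t u :
  wordx z (tcomp i n t u) = flatten (map (Fc i n (wordx z u)) (wordx z t)).
Proof.
rewrite /tcomp wordx_tmap; congr flatten; apply: eq_map => j /=.
rewrite /Fc; case: ifP => //= _; case: ifP => //= _.
by rewrite wordx_relabel.
Qed.

Lemma flatten1 (s : seq nat) : flatten (map (fun j => [:: j]) s) = s.
Proof. by elim: s => //= j s ->. Qed.

Lemma iota_shift n a r : map (fun j => (j + n).-1) (iota a.+1 r) = iota (a + n) r.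
Proof. by elim: r a => //= r IH a; rewrite IH addSn. Qed.

Lemma perm_Fc i m n wt wu : i < m -> perm_eq wt (iota 0 m) -> perm_eq wu (iota 0 n) ->
  perm_eq (flatten (map (Fc i n wu) wt)) (iota 0 (m + n).-1).
Proof.
move=> lim Ht Hu.
apply: (perm_trans (perm_flatten (perm_map _ Ht))).
have -> : iota 0 m = iota 0 i ++ i :: iota i.+1 (m - i.+1).
  by rewrite -[in LHS](subnKC (ltnW lim)) iotaD add0n -(subnSK lim).
rewrite map_cat flatten_cat /=.
have -> : map (Fc i n wu) (iota 0 i) = map (fun j => [:: j]) (iota 0 i).
  by apply/eq_in_map => j; rewrite mem_iota /Fc => /andP [_ ->].
have -> : map (Fc i n wu) (iota i.+1 (m - i.+1)) = map (fun j => [:: (j + n).-1]) (iota i.+1 (m - i.+1)).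
  apply/eq_in_map => j; rewrite mem_iota /Fc => /andP [H1 _].
  by rewrite ltnNge (ltnW H1) /= gtn_eqF.
rewrite flatten1 /Fc ltnn eqxx.
have -> : flatten (map (fun j => [:: (j + n).-1]) (iota i.+1 (m - i.+1))) = iota (i + n) (m - i.+1).
  by rewrite -iota_shift; elim: (iota _ _) => //= j s ->.
have -> : (m + n).-1 = i + (n + (m - i.+1)) by move: lim; clear; lia.
rewrite iotaD iotaD add0n perm_cat2l perm_cat2r.
by rewrite -[i in iota i n]addn0 iotaDl; apply: perm_map.
Qed.

Lemma permcomp_ok (N : exps gT) z m n i t u : i < m -> valid N m t -> valid N n u ->
  permcomp i (seqperm m (wordx z t)) (seqperm n (wordx z u))
     (seqperm (m + n).-1 (wordx z (tcomp i n t u))).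
Proof.
move=> lim /(@valid_perm N m z t) Ht /(@valid_perm N n z u) Hu.
rewrite /permcomp wordx_tcomp (@seqperm_vals _ _ (perm_Fc _ _ _ _ _ lim Ht Hu)).
apply/eqP; congr flatten.
rewrite -{1}(@seqperm_vals _ _ Ht) -map_comp; apply: eq_map => q /=.
rewrite /Fc; case: ifP => // _; case: ifP => // _.
by rewrite -{1}(@seqperm_vals _ _ Hu) -map_comp; apply: eq_map => r /=; rewrite addnC.
Qed.

End F.

Section Comb.
Variable gT : finGroupType.
Implicit Types (t u : tree gT) (ts cs : seq (tree gT)).

Fixpoint comb ts : tree gT :=
  match ts with
  | [::] => @Node gT (GUnit gT) 0 1%g 1%g [::]
  | [:: t] => t
  | t :: ts' => @Node gT (GMul gT) 2 1%g 1%g [:: t; comb ts']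
  end.

Lemma comb_leaves ts : leaves (comb ts) = flatten (map (@leaves gT) ts).
Proof.
elim: ts => // t [|t' ts] IH /=; first by rewrite cats0.
by rewrite cats0; congr (_ ++ _); exact: IH.
Qed.

Lemma comb_wf (N : exps gT) ts : (forall t, List.In t ts -> wf N t) -> wf N (comb ts).
Proof.
elim: ts => [|t [|t' ts] IH] H //=.
- by apply: H; left.
- split=> //; split=> //; split; first by apply: H; left.
  by split=> //; apply: IH => c hc; apply: H; right.
Qed.

Lemma te_triv (x : gkind gT) k g h (s : 'S_k) cs :
  (x = GUnit gT \/ x = GMul gT) -> tequiv (Node x g s cs) (Node x (g * h)%g s cs).
Proof.
move=> Hx; have := @te_coset gT x k g s h 1%g cs.
rewrite mul1g; apply.
apply/andP; split; first by case: Hx => ->; rewrite /= in_setT.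
by apply/forallP => i; rewrite perm1; case: Hx => -> /=.
Qed.

Lemma comb_fix n (l : gT * 'S_n) ts :
  (forall t, List.In t ts -> tequiv (tact l t) t) -> tequiv (tact l (comb ts)) (comb ts).
Proof.
elim: ts => [|t [|t' ts] IH] H.
- change (tequiv (@Node gT (GUnit gT) 0 (l.1 * 1)%g 1%g [::]) (@Node gT (GUnit gT) 0 1%g 1%g [::])).
  apply: te_sym; rewrite mulg1 -{1}(mul1g l.1); apply: te_triv; by left.
- by apply: H; left.
- set c := comb (t' :: ts).
  change (tequiv (@Node gT (GMul gT) 2 (l.1 * 1)%g 1%g [:: tact l t; tact l c])
                 (@Node gT (GMul gT) 2 1%g 1%g [:: t; c])).
  apply: te_trans.
    exact: (@te_cong gT (GMul gT) 2 (l.1 * 1)%g 1%g [::] (tact l t) t [:: tact l c] (H t (or_introl erefl))).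
  apply: te_trans.
    exact: (@te_cong gT (GMul gT) 2 (l.1 * 1)%g 1%g [:: t] (tact l c) c [::] (IH (fun u hu => H u (or_intror hu)))).
  apply: te_sym; rewrite mulg1 -{1}(mul1g l.1); apply: te_triv; by right.
Qed.

End Comb.

Set Implicit Arguments.

Section Orb.
Variable gT : finGroupType.
Variable n : nat.
Variable L : {group (gT * 'S_n)}.
Variable y : {ffun gT -> 'S_n}.
Hypothesis Hy : forall l, l \in L -> PG_act l y = y.

Lemma Lfix l z : l \in L -> (y (l.1^-1 * z) * l.2)%g = y z.
Proof. by move=> lL; have := congr1 (fun F : {ffun gT -> 'S_n} => F z) (Hy lL); rewrite ffunE. Qed.

Lemma Linj l l' : l \in L -> l' \in L -> l.1 = l'.1 -> l = l'.
Proof.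
move=> lL l'L E.
have E2 : l.2 = l'.2.
  apply: (@mulgI _ (y (l.1^-1 * 1))%g).
  by rewrite (Lfix 1 lL) E (Lfix 1 l'L).
by case: l E E2 {lL} => a b; case: l' {l'L} => c d /= -> ->.
Qed.

Lemma Lcomm l l' : l \in L -> l' \in L -> (l.2 * l'.2 = l'.2 * l.2)%g.
Proof.
move=> lL l'L; apply: (@mulgI _ (y 1%g)).
have E1 := Lfix (l.1 * l'.1)%g (groupM lL l'L).
have E2 := Lfix (l.1 * l'.1)%g lL.
have E3 := Lfix l'.1 l'L.
rewrite /= mulVg in E1; rewrite mulKg in E2; rewrite mulVg in E3.
by rewrite E1 -E2 -E3 mulgA.
Qed.

Definition sg (x : gT) : 'S_n := odflt 1%g (omap snd [pick l in L | l.1 == x]).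

Lemma sgE l : l \in L -> sg l.1 = l.2.
Proof.
move=> lL; rewrite /sg; case: pickP => [l' /andP [l'L /eqP E]|H] /=.
  by rewrite (Linj l'L lL E).
by move: (H l); rewrite lL eqxx.
Qed.

Definition Hset := [set l.1 | l in L].
Lemma Hset_gs : group_set Hset.
Proof.
apply/group_setP; split; first by apply/imsetP; exists 1%g; rewrite ?group1.
move=> x z /imsetP [l lL ->] /imsetP [l' l'L ->]; apply/imsetP.
by exists (l * l')%g; rewrite ?groupM.
Qed.
Definition HG : {group gT} := Group Hset_gs.

Lemma inHG l : l \in L -> l.1 \in HG.
Proof. by move=> lL; apply/imsetP; exists l. Qed.

Lemma inL x : x \in HG -> (x, sg x) \in L.
Proof. by case/imsetP => l lL ->; rewrite sgE //; case: l lL. Qed.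

Lemma sgM x z : x \in HG -> z \in HG -> sg (x * z)%g = (sg x * sg z)%g.
Proof. by move=> xH zH; apply: (sgE (groupM (inL xH) (inL zH))). Qed.

Lemma sgC x z : x \in HG -> z \in HG -> (sg x * sg z = sg z * sg x)%g.
Proof. by move=> xH zH; apply: (Lcomm (inL xH) (inL zH)). Qed.

Lemma sgV x : x \in HG -> sg x^-1 = (sg x)^-1%g.
Proof. by move=> xH; apply: (sgE (groupVr (inL xH))). Qed.

Lemma sg1 : sg 1%g = 1%g.
Proof. exact: (sgE (group1 L)). Qed.

Section Pt.
Variable a : 'I_n.

Definition Kset := [set x in HG | sg x a == a].
Lemma Kset_gs : group_set Kset.
Proof.
apply/group_setP; split; first by rewrite inE group1 sg1 perm1 eqxx.
move=> x z; rewrite !inE => /andP [xH /eqP xa] /andP [zH /eqP za].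
by rewrite groupM // sgM // permM xa za eqxx.
Qed.
Definition KG : {group gT} := Group Kset_gs.

Lemma KsubH : KG \subset HG.
Proof. by apply/subsetP => x; rewrite inE => /andP []. Qed.

Lemma inK x : (x \in KG) = (x \in HG) && (sg x a == a).
Proof. by rewrite inE. Qed.

Local Notation k := (orbit_size KG HG).
Local Notation cs := (coset_list KG HG).

Definition pt (C : {set gT}) : 'I_n := sg (repr C) a.
Definition pp (i : 'I_k) : nat := pt (nth set0 cs i).

Lemma ptE x : x \in HG -> pt (x *: KG)%g = sg x a.
Proof.
move=> xH; rewrite /pt.
have := mem_repr _ (lcoset_refl KG x); rewrite mem_lcoset.
set r := repr _ => rK.
have rE : r = (x * (x^-1 * r))%g by rewrite mulKVg.
move: rK; rewrite inK => /andP [kH /eqP ka].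
by rewrite rE sgM // sgC // permM ka.
Qed.

Lemma cs_form (i : 'I_k) : exists2 x, x \in HG & nth set0 cs i = (x *: KG)%g.
Proof. by apply/lcosetsP; apply: cs_mem. Qed.

Definition orb := [set l.2 a | l : gT * 'S_n in L].

Lemma pp_equiv l (i : 'I_k) : l \in L ->
  permfun l.2 (pp i) = pp (@coset_act gT KG HG k l.1 i).
Proof.
move=> lL; rewrite /pp coset_act_nth ?inHG //.
have [x xH ->] := cs_form i.
rewrite -lcosetM !ptE ?groupM ?inHG // permfun_val sgM ?inHG //.
by rewrite -(sgE lL) sgC ?inHG // permM.
Qed.

Lemma pp_inj : injective pp.
Proof.
move=> i j; rewrite /pp => /val_inj E; apply: cs_inj.
have [x xH Ex] := cs_form i; have [x' x'H Ex'] := cs_form j.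
rewrite Ex Ex' in E *; rewrite !ptE // in E.
apply/lcoset_eqP; rewrite mem_lcoset inK groupM ?groupV //=.
by rewrite sgM ?groupV // sgC ?groupV // permM E sgV // permK.
Qed.

Lemma pp_mem (i : 'I_k) : exists2 b, b \in orb & val b = pp i.
Proof.
have [x xH Ex] := cs_form i; exists (pt (nth set0 cs i)) => //.
rewrite Ex ptE //; apply/imsetP; exists (x, sg x) => //; exact: inL.
Qed.

Lemma pp_surj b : b \in orb -> exists i, pp i = val b.
Proof.
case/imsetP => l lL ->.
have Hm : (l.1 *: KG)%g \in cs by rewrite mem_enum; apply/lcosetsP; exists l.1; rewrite ?inHG.
have Hi : index (l.1 *: KG)%g cs < k by move: Hm; rewrite -index_mem size_cs.
exists (Ordinal Hi); rewrite /pp /= nth_index // ptE ?inHG //.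
by rewrite sgE.
Qed.

Lemma orb_a : a \in orb.
Proof. by apply/imsetP; exists 1%g; rewrite ?group1 ?perm1. Qed.

Definition otree : tree gT :=
  if KG \proper HG then @Node gT (GOrb HG KG) k 1%g 1%g [seq Leaf gT (pp i) | i <- enum 'I_k]
  else Leaf gT a.

Lemma flatten_single (A : Type) (f : A -> nat) s :
  flatten (map (fun i => [:: f i]) s) = map f s.
Proof. by elim: s => //= x s ->. Qed.

Lemma In_map (A B : Type) (f : A -> B) s c : List.In c (map f s) -> exists x, c = f x.
Proof. elim: s => //= x s IH [<-|/IH //]; by exists x. Qed.

Lemma permute_seq_map kk (r : 'S_kk) (f : 'I_kk -> tree gT) :
  permute_seq r [seq f i | i <- enum 'I_kk] = [seq f (r i) | i <- enum 'I_kk].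
Proof.
rewrite /permute_seq; apply: eq_map => i.
by rewrite (nth_map i) ?size_enum_ord // nth_ord_enum.
Qed.

Lemma otree_wf : wf (@O_Set gT) otree.
Proof.
rewrite /otree; case: ifP => // Hp; apply/wf_node; split; first by split; [exact: Hp | split].
rewrite size_map size_enum_ord; split=> // c Hc; by have [i ->] := In_map _ _ _ Hc.
Qed.

Lemma otree_leaves : uniq (leaves otree) /\ all (fun j => j < n) (leaves otree) /\
  forall b : 'I_n, (val b \in leaves otree) = (b \in orb).
Proof.
rewrite /otree; case: ifP => Hp.
  rewrite leaves_node -map_comp /= flatten_single.
  split; first by rewrite map_inj_uniq ?enum_uniq //; exact: pp_inj.
  split.
    apply/allP => j /mapP [i _ ->]; have [b _ <-] := pp_mem i; exact: ltn_ord.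
  move=> b; apply/mapP/idP => [[i _ E]|/pp_surj [i Ei]]; last by exists i; rewrite ?mem_enum ?Ei.
  have [b' b'o Eb] := pp_mem i; suff -> : b = b' by [].
  by apply: val_inj; exact: etrans E (esym Eb).
have HK : HG \subset KG by move: Hp; rewrite properE KsubH /= => /negbFE.
have orb1 : forall b, (b \in orb) = (b == a).
  move=> b; apply/idP/eqP => [/imsetP [l lL ->]|->]; last exact: orb_a.
  have := subsetP HK _ (inHG lL); rewrite inK sgE // => /andP [_ /eqP //].
split=> //; split; first by rewrite /= ltn_ord.
by move=> b; rewrite orb1 /= inE.
Qed.

Lemma otree_fix l : l \in L -> tequiv (tact l otree) otree.
Proof.
move=> lL; rewrite /otree; case: ifP => Hp.
  set h := l.1.
  have hH : h \in HG by exact: inHG.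
  pose rho : 'S_k := perm (@coset_act_inj gT HG KG h hH).
  set cs0 := [seq Leaf gT (pp i) | i <- enum 'I_k].
  have E : tact l (@Node gT (GOrb HG KG) k 1%g 1%g cs0) = @Node gT (GOrb HG KG) k h 1%g (permute_seq rho cs0).
    rewrite /tact /relabel /= mulg1; congr Node.
    rewrite /cs0 permute_seq_map -!map_comp; apply: eq_map => i /=.
    by rewrite /rho permE pp_equiv.
  rewrite E; apply: te_sym; apply: te_trans.
    have := @te_coset gT (GOrb HG KG) k 1%g 1%g h rho cs0; rewrite mul1g mulg1; apply.
    by apply/andP; split=> //; apply/forallP => i; rewrite permE.
  rewrite -{1}(mul1g rho); apply: te_perm.
  by rewrite size_map size_enum_ord.
have HK : HG \subset KG by move: Hp; rewrite properE KsubH /= => /negbFE.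
have := subsetP HK _ (inHG lL); rewrite inK sgE // => /andP [_ /eqP la].
by rewrite /tact /relabel /= permfun_val la; apply: te_refl.
Qed.

End Pt.
Definition stable (S : {set 'I_n}) := forall l b, l \in L -> b \in S -> l.2 b \in S.

Lemma orb_stable a : stable (orb a).
Proof.
move=> l b lL /imsetP [l' l'L ->]; apply/imsetP; exists (l' * l)%g; rewrite ?groupM //.
by rewrite /= permM.
Qed.

Lemma orb_back a l b : l \in L -> l.2 b \in orb a -> b \in orb a.
Proof.
move=> lL H; have := orb_stable (groupVr lL) H.
by rewrite /= permK.
Qed.

Definition goodts (ts : seq (tree gT)) (S : {set 'I_n}) :=
  (forall t, List.In t ts -> wf (@O_Set gT) t /\ forall l, l \in L -> tequiv (tact l t) t) /\
  uniq (flatten (map (@leaves gT) ts)) /\ all (fun j => j < n) (flatten (map (@leaves gT) ts)) /\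
  forall b : 'I_n, (val b \in flatten (map (@leaves gT) ts)) = (b \in S).

Lemma build m : forall S : {set 'I_n}, #|S| <= m -> stable S -> exists ts, goodts ts S.
Proof.
elim: m => [|m IH] S HS Hst.
  exists [::]; split=> //; split=> //; split=> // b.
  by move: HS; rewrite leqn0 cards_eq0 => /eqP ->; rewrite inE.
case: (set_0Vmem S) => [->|[a aS]].
  by exists [::]; split=> //; split=> //; split=> // b; rewrite inE.
have orbS : forall b, b \in orb a -> b \in S.
  by move=> b /imsetP [l lL ->]; apply: Hst.
set S' := S :\: orb a.
have HS' : #|S'| <= m.
  have : S' \proper S.
    apply/properP; split; first exact: subsetDl.
    by exists a => //; rewrite inE orb_a.
  by move/proper_card => H; rewrite -ltnS (leq_trans H HS).
have Hst' : stable S'.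
  move=> l b lL; rewrite !inE => /andP [nb bS]; rewrite Hst // andbT.
  by apply: contra nb => /(orb_back lL).
have [ts' [Ht [Hu [Ha Hm]]]] := IH S' HS' Hst'.
have [Ou [Oa Om]] := otree_leaves a.
exists (otree a :: ts'); split.
  move=> t [<-|/Ht //]; split; [exact: otree_wf | move=> l lL; exact: otree_fix].
rewrite /= cat_uniq all_cat Ou Oa Hu Ha /=; split.
  rewrite andbT; apply/hasPn => j jF; have := allP Ha j jF => jn.
  have := Hm (Ordinal jn); rewrite /= jF inE => /esym /andP [nb _].
  by rewrite /= -[j]/(val (Ordinal jn)) Om.
split=> // b; rewrite mem_cat Om Hm inE.
by case: (boolP (b \in orb a)) => //= /orbS ->.
Qed.

Lemma orbit_tree : exists t, valid (@O_Set gT) n t /\ forall l, l \in L -> tequiv (tact l t) t.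
Proof.
have [ts [Ht [Hu [Ha Hm]]]] := @build _ [set: 'I_n] (leqnn _) (fun l b _ _ => in_setT _).
exists (@comb gT ts); split; last by move=> l lL; apply: comb_fix => t /Ht [_ H]; apply: H.
split; first by apply: comb_wf => t /Ht [].
rewrite comb_leaves; apply: uniq_perm => //; first exact: iota_uniq.
move=> j; rewrite mem_iota add0n /=; apply/idP/idP => [jF|jn].
  exact: allP Ha j jF.
by rewrite -[j]/(val (Ordinal jn)) Hm in_setT.
Qed.

End Orb.

Unset Implicit Arguments.

Lemma permfun1 n j : permfun (1%g : 'S_n) j = j.
Proof. by rewrite /permfun; case: insubP => [i _ <-|_] //; rewrite perm1. Qed.

Lemma seqperm_unit : seqperm 1 [:: 0] = 1%g.
Proof.
apply: seqpermE.
have -> : [seq ((1%g : 'S_1) i : nat) | i <- enum 'I_1] = map val (enum 'I_1).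
  by apply: eq_map => i; rewrite perm1.
by rewrite val_enum_ord.
Qed.

Theorem proposition4p16 (gT : finGroupType)
  (F : {group gT} -> forall n, (gT -> 'I_n -> 'I_n) -> Prop) :
  indexing_system F ->
  exists (f : forall n, tree gT -> 'S_n)
         (f' : forall n, tree gT -> {ffun gT -> 'S_n}),
    lw_equiv_eps (@O_empty gT) f /\
    lw_equiv_PG (@O_Set gT) f' /\
    (forall n t, valid (@O_empty gT) n t ->
       (* t in SM_empty, iota = SM_empty <= SM_O(F) <= SM_O(Set) *)
       (valid (O_of F) n (incl t) /\ valid (@O_Set gT) n (incl (incl t))) /\
       @Delta gT n (f n t) = f' n (incl (incl t))).
Proof.
move=> _.
exists (@fE gT), (@fP gT); split; [|split].
- split; [|split; [|split; [|split]]].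
  + by move=> n t u _ _ E; rewrite /fE (@wordx_te gT 1%g _ _ E).
  + exact: seqperm_unit.
  + by move=> m n i t u lim Ht Hu; apply: permcomp_ok Ht Hu.
  + move=> n l t Ht; rewrite /fE wordx_tact (@wf_empty_const gT (l.1^-1 * 1)%g 1%g t (proj1 Ht)).
    by rewrite seqperm_act //; apply: valid_perm Ht.
  + move=> n L [y Hy].
    have L1 : forall l, l \in L -> l.2 = 1%g.
      move=> l lL; apply: (@mulgI _ y); rewrite mulg1; exact: (Hy l lL).
    exists (@comb gT [seq Leaf gT j | j <- iota 0 n]); split.
      split; first by apply: comb_wf => c Hc; have [j ->] := In_map _ _ _ Hc.
      rewrite comb_leaves; suff -> : flatten [seq leaves i | i <- [seq Leaf gT j | j <- iota 0 n]] = iota 0 n by [].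
      by elim: (iota 0 n) => //= j s ->.
    move=> l lL; apply: comb_fix => c Hc; have [j ->] := In_map _ _ _ Hc.
    by rewrite /tact /relabel /= L1 // permfun1; apply: te_refl.
- split; [|split; [|split; [|split]]].
  + by move=> n t u _ _ E; apply/ffunP => z; rewrite !ffunE (@wordx_te gT z _ _ E).
  + by apply/ffunP => z; rewrite !ffunE; exact: seqperm_unit.
  + by move=> m n i t u lim Ht Hu z; rewrite !ffunE; apply: permcomp_ok Ht Hu.
  + move=> n l t Ht; apply/ffunP => z; rewrite /PG_act !ffunE wordx_tact.
    by rewrite seqperm_act //; apply: valid_perm Ht.
  + move=> n L [y Hy]; exact: (@orbit_tree gT n L y Hy).
- move=> n t [Hw Hl]; split; first by split; split=> //; apply: wf_empty_any.
  by apply/ffunP => z; rewrite !ffunE /fE (@wf_empty_const gT 1%g z t Hw).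
Qed.
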